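(* Let $(S,\alpha)$ be a twisted K3 surface, $d=\mathrm{ord}(\alpha)$, $B$ a B-field lift of $\alpha$, and $\lambda:(D_{\widetilde{NS}(S,B)},q)\cong(D_{T(S,B)},-q)$ the natural isometry. Then $(0,0,-\tfrac1d)\in\widetilde{NS}(S,B)^\vee$, and if $y\in T(S,B)^\vee$ represents $\lambda([(0,0,-\tfrac1d)])$, the map $e^B$ restricts to a Hodge isometry $$e^B:T(S)\xrightarrow{\ \sim\ }\langle T(S,B),\,y\rangle\subset T(S,B)^\vee .$$ Moreover, the surjection $\alpha:T(S)\to\mathbb Z/d\mathbb Z$ coincides with the composite $T(S)\xrightarrow{e^B}\langle T(S,B),y\rangle/T(S,B)=\langle [y]\rangle\cong\mathbb Z/d\mathbb Z$, where $[y]\mapsto \bar 1$.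
   Context: $S$ is a complex projective K3 surface with $NS(S)$, $T(S)=NS(S)^\perp\subset H^2(S,\mathbb Z)$ and holomorphic 2-form class $\omega_S$. Mukai lattice $\widetilde H(S,\mathbb Z)=H^0\oplus H^2\oplus H^4$, elements $(a,l,b)$, pairing $((a,l,b),(a',l',b'))=(l,l')-ab'-a'b$. For $B\in H^2(S,\mathbb Q)$, $e^B(a,l,b)=(a,l+aB,b+(B,l)+\frac a2(B,B))$. $\mathrm{Br}(S)\cong H^2(S,\mathbb Q)/(NS(S)_{\mathbb Q}+H^2(S,\mathbb Z))\cong \mathrm{Hom}(T(S),\mathbb Q/\mathbb Z)$, the second isomorphism sending the class of $B$ to $t\mapsto (B,t)\bmod\mathbb Z$; thus $\alpha$ of order $d$ is identified with a surjection $T(S)\to \frac1d\mathbb Z/\mathbb Z\cong\mathbb Z/d\mathbb Z$. A B-field lift of $\alpha$ is a preimage $B\in H^2(S,\mathbb Q)$. The twisted Mukai lattice $\widetilde H(S,B,\mathbb Z)$ is $\widetilde H(S,\mathbb Z)$ with Hodge structure of weight two with $(2,0)$-part $\mathbb C e^B(\omega_S)$; $\widetilde{NS}(S,B)=e^B(\omega_S)^\perp\cap\widetilde H(S,\mathbb Z)$ and $T(S,B)$ is its orthogonal complement in $\widetilde H(S,\mathbb Z)$, with induced Hodge structure; $T(S)$ has its Hodge structure from $H^2(S)$. For an even lattice $L$, $D_L=L^\vee/L$ with $q(x)=(x,x)\bmod 2\mathbb Z$. The natural isometry $\lambda$ sends $[x]$, $x\in\widetilde{NS}(S,B)^\vee$,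 to $[y]$ where $y\in T(S,B)^\vee$ satisfies $x+y\in\widetilde H(S,\mathbb Z)$. *)

(* Defs.v *)
From HB Require Import structures.
From mathcomp Require Import all_boot all_order all_algebra.
Set Implicit Arguments. Unset Strict Implicit. Unset Printing Implicit Defensive.
Import Order.TTheory GRing.Theory Num.Theory.
Local Open Scope ring_scope.

(* ---------- The K3 lattice  U^3 + E8(-1)^2  (Gram matrix of H^2(S,Z)) ---- *)
Definition e8edge (i j : nat) : bool :=
  ((i.+1 == j) && (j <= 6)%N) || ((i == 2%N) && (j == 7%N)).
Definition e8cartan (i j : nat) : int :=
  if i == j then 2 else if e8edge i j || e8edge j i then -1 else 0.
Definition k3gram_nat (i j : nat) : int :=
  if (i < 6)%N && (j < 6)%N then (if (i./2 == j./2) && (i != j) then 1 else 0)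
  else if [&& (6 <= i)%N, (i < 14)%N, (6 <= j)%N & (j < 14)%N]
       then - e8cartan (i - 6) (j - 6)
  else if [&& (14 <= i)%N, (i < 22)%N, (14 <= j)%N & (j < 22)%N]
       then - e8cartan (i - 14) (j - 14)
  else 0.
Definition K3gram : 'M[int]_22 := \matrix_(i < 22, j < 22) k3gram_nat i j.

Definition k3form (R : nzRingType) (u v : 'rV[R]_22) : R :=
  (u *m map_mx (fun z : int => z%:~R) K3gram *m v^T) 0 0.

Definition mvec (R : Type) := (R * 'rV[R]_22 * R)%type.
Definition mpair (R : nzRingType) (v w : mvec R) : R :=
  k3form v.1.2 w.1.2 - v.1.1 * w.2 - w.1.1 * v.2.
Definition madd (R : nzRingType) (v w : mvec R) : mvec R :=
  (v.1.1 + w.1.1, v.1.2 + w.1.2, v.2 + w.2).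
Definition mscale (R : nzRingType) (k : R) (v : mvec R) : mvec R :=
  (k * v.1.1, k *: v.1.2, k * v.2).
Definition mmap (R S : nzRingType) (f : R -> S) (v : mvec R) : mvec S :=
  (f v.1.1, map_mx f v.1.2, f v.2).
Definition eB (R : fieldType) (B : 'rV[R]_22) (v : mvec R) : mvec R :=
  (v.1.1, v.1.2 + v.1.1 *: B, v.2 + k3form B v.1.2 + v.1.1 / 2 * k3form B B).

Definition isZ (x : rat) : Prop := x \is a Num.int.
Definition zvec (l : 'rV[rat]_22) : Prop := forall i, isZ (l 0 i).
Definition mukZ (v : mvec rat) : Prop := [/\ isZ v.1.1, zvec v.1.2 & isZ v.2].

(* om is the class of the holomorphic 2-k3form of a projective K3 surface *)
Definition K3_period (C : numClosedFieldType) (om : 'rV[C]_22) : Prop :=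
  [/\ k3form om om = 0, 0 < k3form om (map_mx Num.conj om) &
      exists h : 'rV[rat]_22, (forall i, isZ (h 0 i)) /\
        k3form (map_mx ratr h) om = 0 /\ 0 < k3form h h].

Definition NS (C : numClosedFieldType) (om : 'rV[C]_22) (l : 'rV[rat]_22) : Prop :=
  zvec l /\ k3form (map_mx ratr l) om = 0.
Definition Tr (C : numClosedFieldType) (om : 'rV[C]_22) (t : 'rV[rat]_22) : Prop :=
  zvec t /\ forall m, NS om m -> k3form t m = 0.

Definition eBom (C : numClosedFieldType) (om : 'rV[C]_22) (B : 'rV[rat]_22) : mvec C :=
  eB (map_mx ratr B) (0, om, 0).

Definition NSt (C : numClosedFieldType) (om : 'rV[C]_22) (B : 'rV[rat]_22)
  (v : mvec rat) : Prop :=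
  mukZ v /\ mpair (mmap ratr v) (eBom om B) = 0.
Definition Tt (C : numClosedFieldType) (om : 'rV[C]_22) (B : 'rV[rat]_22)
  (v : mvec rat) : Prop :=
  mukZ v /\ forall w, NSt om B w -> mpair v w = 0.

(* dual lattice M^vee inside M (x) Q  (M (x) Q = {x | n x \in M, some n > 0}) *)
Definition dual (M : mvec rat -> Prop) (x : mvec rat) : Prop :=
  (exists n : nat, (0 < n)%N /\ M (mscale n%:R x)) /\
  forall m, M m -> isZ (mpair x m).

Definition span_with (M : mvec rat -> Prop) (y v : mvec rat) : Prop :=
  exists u (k : int), M u /\ v = madd u (mscale k%:~R y).

(* ord(alpha) = d, where alpha = [B] in Br(S) = Hom(T(S), Q/Z), t |-> (B,t) mod Z *)
Definition br_order (C : numClosedFieldType) (om : 'rV[C]_22) (B : 'rV[rat]_22)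
  (d : nat) : Prop :=
  [/\ (0 < d)%N,
      forall t, Tr om t -> isZ (d%:R * k3form B t) &
      forall k : nat, (0 < k < d)%N -> exists t, Tr om t /\ ~ isZ (k%:R * k3form B t)].

Definition eBT (B : 'rV[rat]_22) (t : 'rV[rat]_22) : mvec rat := eB B (0, t, 0).

Definition x0 (d : nat) : mvec rat := (0, 0, - (d%:R)^-1).

(* Main.v *)
Require Import Defs.
From HB Require Import structures.
From mathcomp Require Import all_boot all_order all_algebra.
Set Implicit Arguments. Unset Strict Implicit. Unset Printing Implicit Defensive.
Import Order.TTheory GRing.Theory Num.Theory.
Local Open Scope ring_scope.

Lemma e8cartan_sym i j : e8cartan i j = e8cartan j i.
Proof. by rewrite /e8cartan eq_sym orbC. Qed.

Lemma k3gram_nat_sym i j : k3gram_nat i j = k3gram_nat j i.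
Proof.
have E : forall a b c e : bool, [&& a, b, c & e] = [&& c, e, a & b].
  by case; case; case; case.
rewrite /k3gram_nat andbC [i./2 == _]eq_sym (eq_sym i j).
by rewrite (E (6 <= i)%N) (E (14 <= i)%N) e8cartan_sym [e8cartan (j - 14) _]e8cartan_sym.
Qed.

Lemma K3gram_tr : K3gram^T = K3gram.
Proof. by apply/matrixP => i j; rewrite !mxE k3gram_nat_sym. Qed.

Section Form.
Variable R : comNzRingType.
Implicit Types u v w : 'rV[R]_22.

Lemma k3formDl u v w : k3form (u + v) w = k3form u w + k3form v w.
Proof. by rewrite /k3form !mulmxDl mxE. Qed.
Lemma k3formZl a u w : k3form (a *: u) w = a * k3form u w.
Proof. by rewrite /k3form -!scalemxAl mxE. Qed.
Lemma k3form_sym u v : k3form u v = k3form v u.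
Proof.
have tr11 : forall A : 'M[R]_1, A 0 0 = A^T 0 0 by move=> A; rewrite [RHS]mxE.
rewrite /k3form tr11.
by rewrite !trmx_mul trmxK map_trmx K3gram_tr mulmxA.
Qed.
Lemma k3formDr u v w : k3form w (u + v) = k3form w u + k3form w v.
Proof. by rewrite !(k3form_sym w) k3formDl. Qed.
Lemma k3formZr a u w : k3form w (a *: u) = a * k3form w u.
Proof. by rewrite !(k3form_sym w) k3formZl. Qed.
Lemma k3formNl u w : k3form (- u) w = - k3form u w.
Proof. by rewrite -scaleN1r k3formZl mulN1r. Qed.
Lemma k3formNr u w : k3form w (- u) = - k3form w u.
Proof. by rewrite -scaleN1r k3formZr mulN1r. Qed.
Lemma k3formBl u v w : k3form (u - v) w = k3form u w - k3form v w.
Proof. by rewrite k3formDl k3formNl. Qed.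
Lemma k3formBr u v w : k3form w (u - v) = k3form w u - k3form w v.
Proof. by rewrite k3formDr k3formNr. Qed.
Lemma k3form0l w : k3form 0 w = 0.
Proof. by rewrite -(scale0r 0) k3formZl mul0r. Qed.
Lemma k3form0r w : k3form w 0 = 0.
Proof. by rewrite k3form_sym k3form0l. Qed.
End Form.
Lemma isZ_int (m : int) : isZ m%:~R. Proof. exact: intr_int. Qed.
Lemma isZ_nat (m : nat) : isZ m%:R. Proof. exact: natr_int. Qed.
Lemma isZD x y : isZ x -> isZ y -> isZ (x + y). Proof. exact: rpredD. Qed.
Lemma isZB x y : isZ x -> isZ y -> isZ (x - y). Proof. exact: rpredB. Qed.
Lemma isZM x y : isZ x -> isZ y -> isZ (x * y). Proof. exact: rpredM. Qed.
Lemma isZN x : isZ x -> isZ (- x). Proof. by rewrite /isZ rpredN. Qed.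
Lemma isZ0 : isZ 0. Proof. exact: rpred0. Qed.
Lemma isZ1 : isZ 1. Proof. exact: rpred1. Qed.

Lemma k3formZZ u v : zvec u -> zvec v -> isZ (k3form u v).
Proof.
move=> Hu Hv; rewrite /k3form mxE; apply: rpred_sum => j _; rewrite !mxE.
apply: isZM; last exact: Hv.
apply: rpred_sum => k _; apply: isZM; first exact: Hu.
rewrite mxE; exact: isZ_int.
Qed.

Lemma denom (x : 'rV[rat]_22) : exists N : nat, (0 < N)%N /\ zvec (N%:R *: x).
Proof.
exists (\prod_(i < 22) absz (denq (x ord0 i)))%N; split.
  by apply: prodn_gt0 => i; rewrite absz_gt0 denq_neq0.
move=> i; rewrite mxE (bigD1 i) //= natrM -mulrA mulrCA.
have -> : (`|denq (x ord0 i)|%N%:R : rat) * x 0 i = (numq (x ord0 i))%:~R.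
  by rewrite numqE mulrC; congr (_ * _); rewrite pmulrn absz_denq.
exact: isZM (isZ_nat _) (isZ_int _).
Qed.

Definition P (B l : 'rV[rat]_22) : mvec rat := (0, l, k3form B l).

Lemma eBT_P B t : eBT B t = P B t.
Proof. by rewrite /eBT /eB /P /= scale0r !mul0r !addr0 add0r. Qed.

Lemma mpair_P B l (w : mvec rat) :
  mpair (P B l) w = k3form l w.1.2 - w.1.1 * k3form B l.
Proof. by rewrite /mpair /P /= mul0r subr0. Qed.

Lemma mpair_PP B l l' : mpair (P B l) (P B l') = k3form l l'.
Proof. by rewrite mpair_P /= mul0r subr0. Qed.

Lemma madd_P B l l' : madd (P B l) (P B l') = P B (l + l').
Proof. by rewrite /madd /P /= addr0 k3formDr. Qed.

Lemma mscale_P B (k : rat) l : mscale k (P B l) = P B (k *: l).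
Proof. by rewrite /mscale /P /= mulr0 k3formZr. Qed.

Lemma mukZ_P B l : mukZ (P B l) <-> zvec l /\ isZ (k3form B l).
Proof. by rewrite /mukZ /=; split; [case | case; split => //; exact: isZ0]. Qed.

Lemma zvecD u v : zvec u -> zvec v -> zvec (u + v).
Proof. by move=> Hu Hv i; rewrite mxE; apply: isZD. Qed.
Lemma zvecZ (k : int) u : zvec u -> zvec (k%:~R *: u).
Proof. by move=> Hu i; rewrite mxE; apply: isZM (isZ_int _) _. Qed.
Lemma zvec0 : zvec 0.
Proof. by move=> i; rewrite mxE; exact: isZ0. Qed.

Section NSsec.
Variables (C : numClosedFieldType) (om : 'rV[C]_22) (B : 'rV[rat]_22).

Lemma mpair_eBom (w : mvec rat) :
  mpair (mmap ratr w) (eBom om B) = k3form (map_mx ratr (w.1.2 - w.1.1 *: B)) om.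
Proof.
rewrite /mpair /eBom /eB /mmap /= scale0r !mul0r !addr0 add0r subr0.
by rewrite map_mxB map_mxZ k3formBl k3formZl.
Qed.

Lemma NSt_eq w : NSt om B w <-> mukZ w /\ k3form (map_mx ratr (w.1.2 - w.1.1 *: B)) om = 0.
Proof. by rewrite /NSt mpair_eBom. Qed.

Lemma NSt_001 : NSt om B (0, 0, 1).
Proof.
apply/NSt_eq; split; first by split; [exact: isZ0 | exact: zvec0 | exact: isZ1].
by rewrite /= scale0r subr0 map_mx0 k3form0l.
Qed.

Lemma NSt_0m0 m : NS om m -> NSt om B (0, m, 0).
Proof.
case=> Hm Hmo; apply/NSt_eq; split; first by split; [exact: isZ0 | exact: Hm | exact: isZ0].
by rewrite /= scale0r subr0.
Qed.

Lemma NSt_NB (N : nat) : zvec (N%:R *: B) -> NSt om B (N%:R, N%:R *: B, 0).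
Proof.
move=> HB; apply/NSt_eq; split; first by split; [exact: isZ_nat | exact: HB | exact: isZ0].
by rewrite /= subrr map_mx0 k3form0l.
Qed.

Definition perpN (l : 'rV[rat]_22) := forall m, NS om m -> k3form l m = 0.

Lemma orth_NSt l w : perpN l -> NSt om B w -> k3form l (w.1.2 - w.1.1 *: B) = 0.
Proof.
move=> Hl /NSt_eq [_ Hw].
have [N [N0 HN]] := denom (w.1.2 - w.1.1 *: B).
have : k3form l (N%:R *: (w.1.2 - w.1.1 *: B)) = 0.
  apply: Hl; split => //.
  by rewrite map_mxZ k3formZl Hw mulr0.
rewrite k3formZr => /eqP; rewrite mulf_eq0 pnatr_eq0 (gtn_eqF N0) /=.
by move/eqP.
Qed.

Definition perp (v : mvec rat) := forall w, NSt om B w -> mpair v w = 0.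

Lemma perp_P l : perpN l -> perp (P B l).
Proof.
move=> Hl w Hw; rewrite mpair_P (k3form_sym B) -k3formZr -k3formBr.
exact: orth_NSt.
Qed.

Lemma perp_char v : perp v -> v = P B v.1.2.
Proof.
case: v => [[a l] b] Hv.
have Ha : a = 0.
  have := Hv _ NSt_001; rewrite /mpair /= k3form0r mulr1 mul0r subr0 sub0r.
  by move/eqP; rewrite oppr_eq0 => /eqP.
have [N [N0 HN]] := denom B.
have := Hv _ (NSt_NB HN); rewrite /mpair /= Ha mulr0 subr0 k3formZr -mulrBr.
move/eqP; rewrite mulf_eq0 pnatr_eq0 (gtn_eqF N0) /= subr_eq0 => /eqP Hb.
by rewrite /P /= -Hb k3form_sym.
Qed.
Lemma perp_N l : perp (P B l) -> perpN l.
Proof.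
move=> Hl m Hm; have := Hl _ (NSt_0m0 Hm).
by rewrite mpair_P /= mul0r subr0.
Qed.

Lemma perpND l l' : perpN l -> perpN l' -> perpN (l + l').
Proof. by move=> H H' m Hm; rewrite k3formDl H // H' // addr0. Qed.
Lemma perpNZ k l : perpN l -> perpN (k *: l).
Proof. by move=> H m Hm; rewrite k3formZl H // mulr0. Qed.

End NSsec.

Lemma natr_intr (n : nat) : (n%:R : rat) = (n%:Z)%:~R.
Proof. exact: pmulrn. Qed.

Lemma zvecB u v : zvec u -> zvec v -> zvec (u - v).
Proof. by move=> Hu Hv i; rewrite !mxE; apply: isZB; [exact: Hu | exact: Hv]. Qed.
Lemma zvecZn (k : nat) u : zvec u -> zvec (k%:R *: u).
Proof. by rewrite natr_intr; exact: zvecZ. Qed.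

Lemma mpairZl (k : rat) v w : mpair (mscale k v) w = k * mpair v w.
Proof.
rewrite /mpair /mscale /= k3formZl !mulrBr; congr (_ - _ - _).
  by rewrite mulrA.
by rewrite mulrCA.
Qed.

Lemma isZ_fracF (k d : nat) : (0 < k < d)%N -> ~ isZ (k%:R / d%:R).
Proof.
case/andP=> k0 kd /intrP [m Hm].
have d0 : (0 < d)%N by apply: leq_ltn_trans kd.
have H1 : (0 : rat) < m%:~R by rewrite -Hm divr_gt0 // ltr0n.
have H2 : (m%:~R : rat) < 1 by rewrite -Hm ltr_pdivrMr ?ltr0n // mul1r ltr_nat.
rewrite ltr0z in H1; rewrite ltrz1 in H2.
by case: m H1 H2 {Hm} => [mn|mn] //; rewrite ltz_nat => H1 H2; rewrite ltz_nat ltnNge H1 in H2.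
Qed.

Section Main.
Variables (C : numClosedFieldType) (om : 'rV[C]_22) (B : 'rV[rat]_22).

Lemma Tt_P l : Tt om B (P B l) <-> [/\ zvec l, isZ (k3form B l) & perpN om l].
Proof.
split.
  case=> /mukZ_P [Hz Hi] Hp; split => //; exact: perp_N Hp.
case=> Hz Hi Hp; split; first exact/mukZ_P.
exact: perp_P.
Qed.

Lemma Tt_char v : Tt om B v -> v = P B v.1.2.
Proof. by case=> _ Hp; apply: perp_char Hp. Qed.

Lemma Tt_Pc v : Tt om B v -> [/\ zvec v.1.2, isZ (k3form B v.1.2) & perpN om v.1.2].
Proof. by move=> H; apply/Tt_P; rewrite -Tt_char. Qed.

End Main.

Theorem lemma2p2 (C : numClosedFieldType) (om : 'rV[C]_22)
    (B : 'rV[rat]_22) (d : nat) :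
  K3_period om -> br_order om B d ->
  dual (NSt om B) (x0 d) /\
  forall y : mvec rat, dual (Tt om B) y -> mukZ (madd (x0 d) y) ->
  ((* e^B maps T(S) into <T(S,B), y> *)
      (forall t, Tr om t -> span_with (Tt om B) y (eBT B t)) /\
      (* ... onto it *)
      (forall v, span_with (Tt om B) y v -> exists2 t, Tr om t & eBT B t = v) /\
      (* ... injectively *)
      (forall t t', Tr om t -> Tr om t' -> eBT B t = eBT B t' -> t = t') /\
      (* ... isometrically *)
      (forall t t', Tr om t -> Tr om t' -> mpair (eBT B t) (eBT B t') = k3form t t') /\
      (* ... respecting Hodge structures: (2,0)-class om goes to C^x e^B(om) *)
      (exists2 c : C, c != 0 & forall t, Tr om t ->
        mpair (mmap ratr (eBT B t)) (eBom om B) = c * k3form (map_mx ratr t) om) /\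
      (* <T(S,B), y> is contained in T(S,B)^vee *)
      (forall v, span_with (Tt om B) y v -> dual (Tt om B) v) /\
      (* [y] has order d in <T(S,B),y>/T(S,B) *)
      (Tt om B (mscale d%:R y) /\
        (forall k : nat, (0 < k < d)%N -> ~ Tt om B (mscale k%:R y))) /\
      (* alpha = composite T(S) -> <T(S,B),y>/T(S,B) = <[y]> = Z/dZ, [y] |-> 1 *)
      (forall t u (k : int), Tr om t -> Tt om B u ->
        eBT B t = madd u (mscale k%:~R y) ->
        exists n : int, d%:R * k3form B t = n%:~R /\ (k = n %[mod d%:Z])%Z)).
Proof.
move=> _ [d0 Hd Hord].
have dn0 : (d%:R : rat) != 0 by rewrite pnatr_eq0 (gtn_eqF d0).
split.
  split.
    exists d; split => //.
    have -> : mscale d%:R (x0 d) = (0, 0, -1).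
      by rewrite /mscale /x0 /= mulr0 scaler0 mulrN mulfV.
    apply/NSt_eq; split; first by split; [exact: isZ0 | exact: zvec0 | exact: isZN isZ1].
    by rewrite /= scale0r subr0 map_mx0 k3form0l.
  move=> [[a l] b] Hm.
  have Hm' := Hm; case: Hm' => [[/intrP [ai Hai] Hl _]] _; rewrite /= in Hai.
  rewrite /mpair /x0 /= k3form0l mul0r sub0r mulrN opprK.
  have HaT : forall t, Tr om t -> isZ (ai%:~R * k3form B t).
    move=> t [Ht Htp]; have := orth_NSt Htp Hm; rewrite /= k3formBr k3formZr.
    move/eqP; rewrite subr_eq0 => /eqP E.
    by rewrite -Hai (k3form_sym B) -E; apply: k3formZZ.
  set r := (ai %% d%:Z)%Z.
  have r0 : 0 <= r by rewrite modz_ge0 // eqz_nat (gtn_eqF d0).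
  have rd : r < d%:Z by rewrite ltz_pmod // ltz_nat.
  have [rn Ern] : exists rn : nat, r = rn%:Z by exists `|r|%N; rewrite gez0_abs.
  have Erat : (ai%:~R : rat) = (ai %/ d%:Z)%Z%:~R * d%:R + rn%:R.
    by rewrite {1}(divz_eq ai d%:Z) -/r Ern intrD intrM -!natr_intr.
  case: (posnP rn) => [rn0 | rnp].
    rewrite Hai Erat rn0 addr0 -mulrA mulfV // mulr1; exact: isZ_int.
  exfalso.
  have rnd : (rn < d)%N by rewrite -ltz_nat -Ern.
  have [t [Ht Hnt]] := Hord rn (introT andP (conj rnp rnd)).
  apply: Hnt.
  have -> : rn%:R * k3form B t = ai%:~R * k3form B t - (ai %/ d%:Z)%Z%:~R * (d%:R * k3form B t).
    by rewrite Erat mulrDl mulrA addrC addKr.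
  apply: isZB; first exact: HaT.
  apply: isZM; first exact: isZ_int.
  exact: Hd.
move=> y [[n [n0 Hny]] Hydual] Hz.
have Hyp : perp om B y.
  move=> w Hw; have := Hny.2 w Hw; rewrite mpairZl => /eqP.
  by rewrite mulf_eq0 pnatr_eq0 (gtn_eqF n0) /= => /eqP.
have [yl Ey] : exists yl, y = P B yl by exists y.1.2; exact: (perp_char Hyp).
subst y.
have HyN : perpN om yl := perp_N Hyp.
rewrite /madd /x0 /P /= !add0r in Hz; case: Hz => _ Hylz /intrP [mc Hmc].
set c := k3form B yl in Hmc.
have Ec : c = mc%:~R + d%:R^-1 by rewrite -Hmc addrC addNKr.
split.
  move=> t Ht; have /intrP [nt Hnt] := Hd t Ht.
  have Ebt : k3form B t = nt%:~R / d%:R by rewrite -Hnt mulrC mulrA mulVf // mul1r.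
  exists (P B (t - nt%:~R *: yl)), nt; split.
    apply/Tt_P; split.
    - exact: zvecB (Ht.1) (zvecZ _ Hylz).
    - rewrite k3formBr k3formZr -/c Ec Ebt mulrDr.
      rewrite (addrC (nt%:~R * mc%:~R)) opprD addrA subrr add0r.
      exact: isZN (isZM (isZ_int _) (isZ_int _)).
    - apply: perpND; [exact: Ht.2 | rewrite -scaleNr; exact: perpNZ].
  by rewrite eBT_P mscale_P madd_P subrK.
split.
  move=> v [u [k [Hu ->]]].
  have [Hul _ HulN] := Tt_Pc Hu.
  rewrite (Tt_char Hu) mscale_P madd_P.
  exists (u.1.2 + k%:~R *: yl); last by rewrite eBT_P.
  split; [exact: zvecD Hul (zvecZ k Hylz) | exact: perpND HulN (perpNZ _ HyN)].
split.
  by move=> t t' _ _; rewrite !eBT_P => /(congr1 (fun v => v.1.2)).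
split.
  by move=> t t' _ _; rewrite !eBT_P mpair_PP.
split.
  exists 1; first exact: oner_neq0.
  by move=> t _; rewrite eBT_P mpair_eBom /P /= scale0r subr0 mul1r.
split.
  move=> v [u [k [Hu ->]]].
  have [Hul Hulz HulN] := Tt_Pc Hu.
  rewrite (Tt_char Hu) mscale_P madd_P; split.
    exists n; split => //.
    move: Hny; rewrite !mscale_P => /Tt_P [Hnz Hnb HnN].
    apply/Tt_P; rewrite scalerDr scalerA mulrC -scalerA; split.
    - exact: zvecD (zvecZn _ Hul) (zvecZ k Hnz).
    - rewrite k3formDr k3formZr (k3formZr (k%:~R)).
      exact: isZD (isZM (isZ_nat _) Hulz) (isZM (isZ_int _) Hnb).
    - exact: perpND (perpNZ _ HulN) (perpNZ _ HnN).
  move=> m Hm; have [Hml _ _] := Tt_Pc Hm.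
  have := Hydual _ Hm; rewrite (Tt_char Hm) !mpair_PP k3formDl k3formZl => Hy.
  exact: isZD (k3formZZ Hul Hml) (isZM (isZ_int _) Hy).
split.
  split.
    rewrite mscale_P; apply/Tt_P; split.
    - exact: zvecZn.
    - rewrite k3formZr -/c (_ : d%:R * c = d%:R * mc%:~R + 1).
        exact: isZD (isZM (isZ_nat _) (isZ_int _)) isZ1.
      by rewrite Ec mulrDr mulfV.
    - exact: perpNZ.
  move=> k Hk; rewrite mscale_P => /Tt_P [_ Hkc _].
  apply: (isZ_fracF Hk).
  rewrite k3formZr -/c Ec mulrDr in Hkc.
  have := isZB Hkc (isZM (isZ_nat k) (isZ_int mc)).
  by rewrite addrAC subrr add0r.
move=> t u k Ht Hu E.
have /intrP [nt Hnt] := Hd t Ht.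
exists nt; split => //.
rewrite eBT_P (Tt_char Hu) mscale_P madd_P in E.
have Et : t = u.1.2 + k%:~R *: yl := congr1 (fun v => v.1.2) E.
have [_ Hulz _] := Tt_Pc Hu.
case/intrP: Hulz => mu Hmu.
have Eint : nt = d%:Z * (mu + k * mc) + k.
  apply/eqP; rewrite -(eqr_int rat) -Hnt Et k3formDr k3formZr Hmu -/c Ec.
  rewrite !(intrD, intrM) -natr_intr !mulrDr.
  rewrite [d%:R * (k%:~R * d%:R^-1)]mulrCA mulfV // mulr1 addrA.
  by [].
apply/eqP; rewrite eq_sym eqz_mod_dvd Eint addrK.
exact: dvdz_mulr (dvdzz _).
Qed.
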